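(* Let $k\ge 2$ and let $\mathcal{H}=(V,E)$ be a hypergraph such that: $\mathcal{H}$ is linear and $k$-uniform; $|V|=k^2$; $|E|=k^2+1$; and there is a hyperedge $e_0\in E$ such that $\mathrm{deg}_{\mathcal{H}}(x)=k+1$ for all $x\in e_0$ and $\mathrm{deg}_{\mathcal{H}}(x)\ge k$ for all $x\in V\smallsetminus e_0$. Then (i) $\Delta([\mathcal{H}]_2)=k^2-1$ and $\delta([\mathcal{H}]_2)=k^2-k$; (ii) $k+1\le \mathrm{q}(\mathcal{H})\le 1+k\lceil k/2\rceil$; (iii) $\mathrm{q}(\mathcal{H})\le \Delta([\mathcal{H}]_2)$.
   Context: A hypergraph $\mathcal{H}=(V,E)$ has a finite vertex set $V$ and a finite set $E$ of nonempty subsets of $V$ (hyperedges). It is linear if $|e\cap e'|\le1$ for distinct hyperedges, $k$-uniform if every hyperedge has exactly $k$ elements. $\mathrm{deg}_{\mathcal{H}}(x)$ is the number of hyperedges containing $x$. The 2-section $[\mathcal{H}]_2$ is the simple graph on $V$ where distinct vertices are adjacent iff some hyperedge contains both; $\Delta([\mathcal{H}]_2)$ and $\delta([\mathcal{H}]_2)$ are its maximum and minimum degrees. The chromatic index $\mathrm{q}(\mathcal{H})$ is the least number of colors in a coloring of the hyperedges in which distinct intersecting hyperedges get different colors. *)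

(* Defs.v *)
From mathcomp Require Import all_boot.
Set Implicit Arguments. Unset Strict Implicit. Unset Printing Implicit Defensive.

Section Hypergraph.
Variable V : finType.
Implicit Types (E : {set {set V}}) (x y : V).

Definition hypergraph E : Prop := set0 \notin E.

Definition linear E : Prop :=
  forall e e', e \in E -> e' \in E -> e != e' -> #|e :&: e'| <= 1.

Definition uniform (k : nat) E : Prop := forall e, e \in E -> #|e| = k.

Definition deg E x : nat := #|[set e in E | x \in e]|.

Definition adj2 E x y : bool :=
  (x != y) && [exists e in E, (x \in e) && (y \in e)].

Definition deg2 E x : nat := #|[set y | adj2 E x y]|.

(* maximum / minimum degree of the 2-section (V is nonempty in use;
   the min uses #|V| as neutral element, which exceeds every degree) *)
Definition Delta2 E : nat := \max_(x : V) deg2 E x.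
Definition delta2 E : nat := \big[minn/#|V|]_(x : V) deg2 E x.

Definition colorable E (c : nat) : bool :=
  [exists f : {ffun {set V} -> 'I_c},
    [forall e in E, forall e' in E,
       ((e != e') && (e :&: e' != set0)) ==> (f e != f e')]].

(* chromatic index: the least c such that E is c-colourable
   (E is always #|E|-colourable, so the minimum over c <= #|E| is the true one) *)
Definition chromatic_index E : nat :=
  \big[minn/#|E|]_(c < #|E|.+1 | colorable E c) (c : nat).

End Hypergraph.

(* Main.v *)
Require Import Defs.
From mathcomp Require Import all_boot zify.
Set Implicit Arguments. Unset Strict Implicit. Unset Printing Implicit Defensive.

Lemma dcount (T : finType) (F : {set {set T}}) (D : {set T}) :
  \sum_(f in F) #|f :&: D| = \sum_(y in D) #|[set f in F | y \in f]|.
Proof.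
have h1 f : #|f :&: D| = \sum_(y in D) (y \in f).
  rewrite -sum1_card (eq_bigl (fun y => (y \in D) && (y \in f))); last first.
    by move=> y; rewrite inE andbC.
  by rewrite big_mkcondr /=; apply: eq_bigr => y _; case: (y \in f).
have h2 y : #|[set f in F | y \in f]| = \sum_(f in F) (y \in f).
  rewrite -sum1_card (eq_bigl (fun f => (f \in F) && (y \in f))); last first.
    by move=> f; rewrite inE.
  by rewrite big_mkcondr /=; apply: eq_bigr => f _; case: (y \in f).
rewrite (eq_bigr _ (fun f _ => h1 f)) exchange_big /=.
by apply: eq_bigr => y _; rewrite h2.
Qed.

Lemma sum_le1 (T : finType) (A : {set T}) (F : T -> nat) :
  (forall i, i \in A -> F i <= 1) -> \sum_(i in A) F i <= #|A|.
Proof.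
move=> h; rewrite -sum1_card; apply: leq_sum => i /h //.
Qed.

Lemma sum_ge1 (T : finType) (A : {set T}) (F : T -> nat) :
  (forall i, i \in A -> 1 <= F i) -> #|A| <= \sum_(i in A) F i.
Proof.
move=> h; rewrite -sum1_card; apply: leq_sum => i /h //.
Qed.

Lemma sum_le1_eq (T : finType) (A : {set T}) (F : T -> nat) :
  (forall i, i \in A -> F i <= 1) -> \sum_(i in A) F i = #|A| ->
  forall i, i \in A -> F i = 1.
Proof.
move=> h hs i iA.
move: hs; rewrite -sum1_card (bigD1 i) //= [in X in _ = X](bigD1 i) //=.
have : \sum_(j in A | j != i) F j <= \sum_(j in A | j != i) 1.
  by apply: leq_sum => j /andP [/h].
have := h i iA. lia.
Qed.

Lemma sumb_card (T : finType) (A : {set T}) (b : pred T) :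
  \sum_(i in A) (b i : nat) = #|[set i in A | b i]|.
Proof.
rewrite -sum1_card [RHS](eq_bigl (fun i => (i \in A) && b i)); last by move=> i; rewrite inE.
by rewrite [RHS]big_mkcondr /=; apply: eq_bigr => i _; case: (b i).
Qed.

Lemma bigmin_le_cond (I : eqType) (F : I -> nat) d z (r : seq I) (P : pred I) :
  z \in r -> P z -> \big[minn/d]_(i <- r | P i) F i <= F z.
Proof.
elim: r => // a r IH; rewrite inE big_cons => /orP [/eqP <- -> | /IH h /h {}h].
  exact: geq_minl.
case: (P a) => //; exact: leq_trans (geq_minr _ _) h.
Qed.

Lemma ci_le (T : finType) (E : {set {set T}}) N :
  colorable E N -> N <= #|E| -> chromatic_index E <= N.
Proof.
move=> cN hN; have hN' : N < #|E|.+1 by [].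
rewrite /chromatic_index.
have := @bigmin_le_cond _ (fun c : 'I_#|E|.+1 => (c : nat)) #|E| (Ordinal hN')
  (index_enum _) (fun c : 'I_#|E|.+1 => colorable E c) (mem_index_enum _) cN.
by [].
Qed.

Lemma ci_ge (T : finType) (E : {set {set T}}) m :
  (forall c, colorable E c -> m <= c) -> m <= #|E| -> m <= chromatic_index E.
Proof.
move=> h hE; rewrite /chromatic_index; apply: (big_ind (fun c => m <= c)) => //.
  by move=> a b ha hb; rewrite leq_min ha hb.
by move=> i /h.
Qed.

Lemma col_lower (T : finType) (E : {set {set T}}) c x :
  colorable E c -> #|[set f in E | x \in f]| <= c.
Proof.
case/existsP => col /forall_inP H.
set S := [set f in E | x \in f].
have <- : #|col @: S| = #|S|.
  apply: card_in_imset => f f'; rewrite !inE => /andP [fE xf] /andP [f'E xf'] hc.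
  apply/eqP; apply: contraT => ff; have /forall_inP := H f fE => /(_ f' f'E).
  rewrite ff /= hc eqxx /= => /implyP; apply.
  by apply/set0Pn; exists x; rewrite inE xf xf'.
by apply: leq_trans (max_card _) _; rewrite card_ord.
Qed.

Lemma colorable_rep (T : finType) (E : {set {set T}}) (rep : {set T} -> {set T}) n :
  (forall f f', f \in E -> f' \in E -> f != f' -> f :&: f' != set0 -> rep f != rep f') ->
  #|rep @: E| <= n.+1 -> colorable E n.+1.
Proof.
move=> H hc; set s := enum (rep @: E).
apply/existsP; exists [ffun f => (inord (index (rep f) s) : 'I_n.+1)].
apply/forall_inP => f fE; apply/forall_inP => f' f'E; apply/implyP => /andP [ff inter].
rewrite !ffunE; apply: contra (H f f' fE f'E ff inter) => /eqP h.
have mf : rep f \in s by rewrite mem_enum; apply: imset_f.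
have mf' : rep f' \in s by rewrite mem_enum; apply: imset_f.
have hs : size s <= n.+1 by rewrite -cardE.
have := f_equal val h; rewrite /= !inordK; last 2 first.
- by apply: leq_trans hs; rewrite index_mem.
- by apply: leq_trans hs; rewrite index_mem.
by move=> e; rewrite -(nth_index f mf) e nth_index.
Qed.

Lemma sum_even n : \sum_(0 <= i < n) (~~ odd i : nat) = uphalf n.
Proof.
elim: n => [|n IH]; first by rewrite big_geq.
rewrite big_nat_recr //= IH uphalf_half; by case: (odd n); rewrite /= ?addn0 ?addn1.
Qed.

Lemma bigmin_le (I : eqType) (F : I -> nat) d z (r : seq I) :
  z \in r -> \big[minn/d]_(i <- r) F i <= F z.
Proof.
elim: r => // a r IH; rewrite inE big_cons => /orP [/eqP <- | /IH h].
  exact: geq_minl.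
exact: leq_trans (geq_minr _ _) h.
Qed.

Section S.
Variables (k : nat) (V : finType) (E : {set {set V}}) (e0 : {set V}).
Hypotheses (k2 : 2 <= k) (lin : linear E) (uni : uniform k E)
  (cV : #|V| = k ^ 2) (cE : #|E| = k ^ 2 + 1) (e0E : e0 \in E)
  (dege0 : forall x, x \in e0 -> deg E x = k + 1)
  (dego : forall x, x \notin e0 -> k <= deg E x).

Lemma lin2 f g a b : f \in E -> g \in E -> a != b -> a \in f -> b \in f ->
  a \in g -> b \in g -> f = g.
Proof.
move=> fE gE ab af bf ag bg; apply/eqP; apply: contraT => fg.
have := lin fE gE fg.
have : [set a; b] \subset f :&: g by apply/subsetP => z; rewrite !inE => /orP [] /eqP ->; rewrite ?af ?ag ?bf ?bg.
move/subset_leq_card; rewrite cards2 ab. lia.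
Qed.

Definition S y := [set f in E | y \in f] :\ e0.

Lemma inS y f : (f \in S y) = [&& f != e0, f \in E & y \in f].
Proof. by rewrite !inE. Qed.

Lemma cardS y : y \in e0 -> #|S y| = k.
Proof.
move=> ye; have := dege0 ye; rewrite /deg (cardsD1 e0) inE e0E ye /=.
by rewrite /S add1n addn1 => -[].
Qed.

Lemma meet1 f : f \in E -> f != e0 -> #|f :&: e0| = 1.
Proof.
move=> fE fe.
have h := dcount (E :\ e0) e0.
have h2 : \sum_(y in e0) #|[set g in E :\ e0 | y \in g]| = #|E :\ e0|.
  rewrite (eq_bigr (fun _ => k)); last first.
    move=> y ye; rewrite -(cardS ye); apply: eq_card => g; rewrite !inE. by rewrite andbA.
  rewrite sum_nat_const (uni e0E); move: (cardsD1 e0 E); rewrite e0E cE /= -mulnn add1n addn1 => -[] ->. done.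
refine (@sum_le1_eq _ (E :\ e0) (fun g => #|g :&: e0|) _ _ f _); last by rewrite !inE fe fE.
  move=> g; rewrite !inE => /andP [ge gE]; exact: lin.
by rewrite h h2.
Qed.

Lemma outer z : z \notin e0 -> deg E z = k /\
  forall y, y \in e0 -> exists f, [/\ f \in E, z \in f & y \in f].
Proof.
move=> ze.
set T := [set f in E | z \in f].
have h := dcount T e0.
have hl : \sum_(f in T) #|f :&: e0| = deg E z.
  rewrite /deg -/T -sum1_card; apply: eq_bigr => f; rewrite inE => /andP [fE zf].
  apply: meet1 => //; apply: contraNneq ze => <- //.
have hr : forall y, y \in e0 -> #|[set f in T | y \in f]| <= 1.
  move=> y ye; case: (set_0Vmem [set f in T | y \in f]) => [-> | [f]]; first by rewrite cards0.
  rewrite !inE => /andP [/andP [fE zf] yf].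
  have -> : [set f0 in T | y \in f0] = [set f].
    apply/setP => g; rewrite !inE; apply/idP/idP; last by move/eqP ->; rewrite fE zf yf.
    move=> /andP [/andP [gE zg] yg]; apply/eqP.
    apply: (lin2 (a:=z) (b:=y)) => //; apply: contraNneq ze => -> //.
  by rewrite cards1.
have hle : deg E z <= k.
  by rewrite -hl h -(uni e0E); apply: sum_le1.
have dz : deg E z = k by have := dego ze; lia.
split => // y ye.
have := sum_le1_eq hr; rewrite -h hl dz (uni e0E) => /(_ erefl y ye).
move=> /eqP; rewrite eqn_leq => /andP [_]; rewrite card_gt0 => /set0Pn [f].
by rewrite !inE => /andP [/andP [fE zf] yf]; exists f.
Qed.


Lemma disjF (A B : {set V}) z : [disjoint A & B] -> z \in A -> z \in B -> False.
Proof.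
move=> /disjoint_setI0 h zA zB; have : z \in A :&: B by rewrite inE zA zB.
by rewrite h inE.
Qed.

Lemma e0pt g a b : g \in E -> g != e0 -> a \in g -> a \in e0 -> b \in g -> b \in e0 -> a = b.
Proof.
move=> gE ge ag ae bg be; apply/eqP; apply: contraT => ab.
by move: ge; rewrite (lin2 gE e0E ab ag bg ae be) eqxx.
Qed.

Lemma le1_two a b : a != b -> #|[set g in E | (a \in g) && (b \in g)]| <= 1.
Proof.
move=> ab; case: (set_0Vmem [set g in E | (a \in g) && (b \in g)]) => [-> | [f]]; first by rewrite cards0.
rewrite !inE => /andP [fE /andP [af bf]].
have -> : [set g in E | (a \in g) && (b \in g)] = [set f].
  apply/setP => g; rewrite !inE; apply/idP/idP; last by move/eqP ->; rewrite fE af bf.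
  move=> /andP [gE /andP [ag bg]]; apply/eqP.
  exact: (lin2 (a:=a) (b:=b)).
by rewrite cards1.
Qed.

Lemma cardD1k f x : f \in E -> x \in f -> #|f :\ x| = k.-1.
Proof. move=> fE xf; have := cardsD1 x f; rewrite xf (uni fE) /=; lia. Qed.

Lemma exA x y f : x \in e0 -> y \in e0 -> x != y -> f \in S x ->
  exists g, g \in S y /\ [disjoint f & g].
Proof.
move=> xe ye xy; rewrite inS => /and3P [fe fE xf].
case: (boolP [exists g in S y, [disjoint f & g]]) => [/exists_inP [g gS dg] | H].
  by exists g.
exfalso; move/exists_inPn: H => H.
have h := dcount (S y) (f :\ x).
have h1 : #|S y| <= \sum_(g in S y) #|g :&: (f :\ x)|.
  apply: sum_ge1 => g gS; have := H g gS; rewrite -setI_eq0 => /set0Pn [z].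
  move: gS; rewrite inS inE => /and3P [ge gE yg] /andP [zf zg].
  rewrite card_gt0; apply/set0Pn; exists z; rewrite !inE zf zg andbT /=.
  apply: contraNneq xy => zx; subst z; apply/eqP; exact: (e0pt gE ge).
have h2 : \sum_(z in f :\ x) #|[set g in S y | z \in g]| <= #|f :\ x|.
  apply: sum_le1 => z; rewrite !inE => /andP [zx zf].
  have yz : y != z.
    apply: contraNneq xy => yz; subst z; apply/eqP; exact: (e0pt fE fe).
  apply: leq_trans (le1_two yz); apply: subset_leq_card; apply/subsetP => g.
  by rewrite !inE => /andP [/andP [_ /andP [-> ->]] ->].
have := cardS ye; have := cardD1k fE xf; lia.
Qed.

Lemma exB x y g f f' : x \in e0 -> y \in e0 -> x != y -> g \in S x ->
  f \in S y -> f' \in S y -> [disjoint f & g] -> [disjoint f' & g] -> f = f'.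
Proof.
move=> xe ye xy gS fS f'S dfg df'g.
apply/eqP; apply: contraT => ff.
move: (gS); rewrite inS => /and3P [ge gE xg].
set F := S y :\ f :\ f'.
have cF : #|F| = k - 2.
  have := cardsD1 f' (S y :\ f); have := cardsD1 f (S y).
  rewrite fS inE f'S (cardS ye) /= -/F inE eq_sym ff /=; lia.
have hd := dcount F (g :\ x).
have h1 : \sum_(h in F) #|h :&: (g :\ x)| <= #|F|.
  apply: sum_le1 => h; rewrite !inE => /andP [_ /andP [_ /andP [he /andP [hE yh]]]].
  have hg : h != g.
    apply: contraNneq xy => hg; subst h; apply/eqP; exact: (e0pt gE ge).
  apply: leq_trans (lin hE gE hg); apply: subset_leq_card; apply: setIS; exact: subsetDl.
have h2 : #|g :\ x| <= \sum_(z in g :\ x) #|[set h in F | z \in h]|.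
  apply: sum_ge1 => z; rewrite !inE => /andP [zx zg].
  have ze : z \notin e0.
    by apply/negP => ze; move: zx; rewrite (e0pt gE ge zg ze xg xe) eqxx.
  have [_ /(_ y ye) [h [hE zh yh]]] := outer ze.
  rewrite card_gt0; apply/set0Pn; exists h; rewrite !inE zh hE yh !andbT /=.
  apply/and3P; split.
  - by apply: contraTneq zh => ->; apply/negP => zf'; exact: (disjF df'g zf' zg).
  - by apply: contraTneq zh => ->; apply/negP => zf; exact: (disjF dfg zf zg).
  - by apply: contraNneq ze => <-.
move: h1 h2 cF k2; rewrite hd; have := cardD1k gE xg; clear; lia.
Qed.

Lemma deg2_e0 x : x \in e0 -> deg2 E x = k ^ 2 - 1.
Proof.
move=> xe; rewrite /deg2.
have -> : [set y | adj2 E x y] = [set~ x].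
  apply/setP => y; rewrite !inE /adj2 eq_sym; case xy: (y != x) => //=.
  apply/exists_inP; case: (boolP (y \in e0)) => ye; first by exists e0; rewrite ?xe ?ye.
  have [_ /(_ x xe) [f [fE yf xf]]] := outer ye.
  by exists f; rewrite ?xf ?yf.
by rewrite cardsC1 cV subn1.
Qed.

Lemma deg2_out x : x \notin e0 -> deg2 E x = k ^ 2 - k.
Proof.
move=> xe; set T := [set f in E | x \in f].
have hd := dcount T [set~ x].
have hl : \sum_(f in T) #|f :&: [set~ x]| = k * k.-1.
  rewrite (eq_bigr (fun _ => k.-1)); last first.
    by move=> f; rewrite inE -setDE => /andP [fE xf]; rewrite cardD1k.
  by rewrite sum_nat_const; have [dx _] := outer xe; move: dx; rewrite /deg -/T => ->.
have hr : \sum_(y in [set~ x]) #|[set f in T | y \in f]| = deg2 E x.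
  rewrite (eq_bigr (fun y => (adj2 E x y : nat))); last first.
    move=> y; rewrite !inE => yx; rewrite /adj2 eq_sym yx /=.
    case: (boolP [exists e in E, (x \in e) && (y \in e)]) => [/exists_inP [e eE /andP [xe' ye]] | H].
      apply/eqP; rewrite eqn_leq; apply/andP; split.
        apply: leq_trans (le1_two (a := x) (b := y) _); last by rewrite eq_sym.
        apply: subset_leq_card; apply/subsetP => f; rewrite !inE.
        by move=> /andP [/andP [-> ->] ->].
      by rewrite card_gt0; apply/set0Pn; exists e; rewrite !inE eE xe' ye.
    apply/eqP; rewrite cards_eq0; apply/eqP/setP => f; rewrite !inE.
    apply/negP => /andP [/andP [fE xf] yf]; move/exists_inPn: H => /(_ f fE).
    by rewrite xf yf.
  rewrite sumb_card /deg2; apply: eq_card => y; rewrite !inE.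
  by case xy: (adj2 E x y); rewrite ?andbF ?andbT //; move: xy => /andP [xy _]; rewrite eq_sym.
rewrite -hr -hd hl -mulnn; case: k k2 => // n _ /=; lia.
Qed.

Lemma Delta2_val : Delta2 E = k ^ 2 - 1.
Proof.
have [x0 x0e] : exists x, x \in e0.
  by apply/set0Pn; rewrite -card_gt0 (uni e0E); lia.
apply/eqP; rewrite eqn_leq; apply/andP; split.
  apply/bigmax_leqP => x _; case: (boolP (x \in e0)) => h.
    by rewrite deg2_e0.
  rewrite deg2_out // -mulnn; lia.
by rewrite -(deg2_e0 x0e); apply: leq_bigmax.
Qed.

Lemma delta2_val : delta2 E = k ^ 2 - k.
Proof.
have [z ze] : exists z, z \in ~: e0.
  apply/set0Pn; rewrite -card_gt0; have := cardsC e0; rewrite (uni e0E) cV -mulnn.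
  move: k2; clear; nia.
rewrite inE in ze.
apply/eqP; rewrite eqn_leq; apply/andP; split.
  rewrite /delta2 -(deg2_out ze); apply: bigmin_le; exact: mem_index_enum.
rewrite /delta2; apply: (big_ind (fun m => k ^ 2 - k <= m)).
- by rewrite cV leq_subr.
- by move=> a b ha hb; rewrite leq_min ha hb.
- move=> x _; case: (boolP (x \in e0)) => h.
    rewrite deg2_e0 // -mulnn; lia.
  by rewrite deg2_out.
Qed.

Variable x0 : V.
Hypothesis x0e : x0 \in e0.

Definition sq := enum e0.
Definition first x := ~~ odd (index x sq).
Definition partner x :=
  nth x sq (if odd (index x sq) then (index x sq).-1 else (index x sq).+1).
Definition pt f := odflt x0 [pick x in f :&: e0].
Definition rep f :=
  if f == e0 then e0 else if first (pt f) then f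
  else odflt f [pick g in E | [&& g != e0, partner (pt f) \in g & [disjoint f & g]]].

Lemma pt_spec f : f \in E -> f != e0 -> pt f \in f /\ pt f \in e0.
Proof.
move=> fE fe; rewrite /pt; case: pickP => [y /setIP [] // | H].
have := meet1 fE fe; rewrite (eq_card0 H) //.
Qed.

Lemma pt_uniq f y : f \in E -> f != e0 -> y \in f -> y \in e0 -> pt f = y.
Proof.
move=> fE fe yf ye; have [pf pe] := pt_spec fE fe; exact: (e0pt fE fe).
Qed.

Lemma partner_in x : x \in e0 -> partner x \in e0.
Proof.
move=> xe; rewrite /partner.
set j := (if _ then _ else _).
case: (ltnP j (size sq)) => h; last by rewrite nth_default.
by rewrite -mem_enum; apply: mem_nth.
Qed.

Lemma partner_nf x : x \in e0 -> ~~ first x ->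
  [/\ first (partner x), partner x != x & partner (partner x) = x].
Proof.
move=> xe; rewrite /first => /negPn oi.
have xs : x \in sq by rewrite mem_enum.
have hi := xs; rewrite -index_mem in hi.
move: oi hi; case ei: (index x sq) => [|i] //= oi hi.
have us : uniq sq by apply: enum_uniq.
have hp : partner x = nth x sq i by rewrite /partner ei /= oi.
have ip : index (partner x) sq = i by rewrite hp index_uniq //; apply: ltnW.
split.
- by rewrite /first ip.
- by apply/negP => /eqP e; move: ip; rewrite e ei => h0; exact: (n_Sn _ (esym h0)).
- rewrite {1}/partner ip (negbTE oi) -ei; exact: nth_index.
Qed.

Lemma rep_e0 : rep e0 = e0.
Proof. by rewrite /rep eqxx. Qed.

Lemma rep_spec f : f \in E -> f != e0 ->
  (first (pt f) /\ rep f = f) \/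
  [/\ ~~ first (pt f), rep f \in S (partner (pt f)) & [disjoint f & rep f]].
Proof.
move=> fE fe; have [pf pe] := pt_spec fE fe.
rewrite /rep (negbTE fe); case: ifP => hf; first by left.
right; have [fs pp _] := partner_nf pe (negbT hf).
have fS : f \in S (pt f) by rewrite inS fe fE pf.
have pp' : pt f != partner (pt f) by rewrite eq_sym.
have [g [gS dg]] := exA pe (partner_in pe) pp' fS.
case: pickP => [g' /and4P [g'E g'e pg' dg'] | H] /=.
  by split; rewrite ?hf // inS g'E g'e pg'.
move: (H g); move: gS; rewrite inS => /and3P [ge gE pg].
by rewrite gE ge pg dg.
Qed.

Lemma rep_ne0 f : f \in E -> f != e0 -> rep f != e0.
Proof.
move=> fE fe; case: (rep_spec fE fe) => [[_ ->] // | [_ + _]].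
by rewrite inS => /andP [].
Qed.

Lemma rep_proper f f' : f \in E -> f' \in E -> f != f' -> f :&: f' != set0 ->
  rep f != rep f'.
Proof.
move=> fE f'E ff inter.
have [z] := set0Pn _ inter; rewrite inE => /andP [zf zf'].
case: (eqVneq f e0) => [fe | fe].
  subst f; rewrite rep_e0 eq_sym; apply: rep_ne0 => //; by rewrite eq_sym.
case: (eqVneq f' e0) => [f'e | f'e].
  subst f'; rewrite rep_e0; exact: rep_ne0.
have [pf pe] := pt_spec fE fe; have [pf' pe'] := pt_spec f'E f'e.
case: (rep_spec fE fe) => [[h1 ->] | [h1 gS dg]];
case: (rep_spec f'E f'e) => [[h2 ->] | [h2 gS' dg']] => //.
- by apply/eqP => e; rewrite -e in dg'; exact: (disjF dg' zf' zf).
- by apply/eqP => e; rewrite e in dg; exact: (disjF dg zf zf').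
apply/eqP => e; rewrite -e in gS' dg'.
move: (gS) (gS'); rewrite !inS => /and3P [ge gE pg] /and3P [_ _ pg'].
have epp : partner (pt f) = partner (pt f') by
  exact: (e0pt gE ge pg (partner_in pe) pg' (partner_in pe')).
have [_ n1 i1] := partner_nf pe h1; have [_ n2 i2] := partner_nf pe' h2.
have ep : pt f = pt f' by rewrite -i1 epp i2.
move: ff; rewrite (exB (partner_in pe) pe n1 gS (f := f) (f' := f')) ?eqxx //.
- by rewrite inS fe fE pf.
- by rewrite inS f'e f'E ep pf'.
Qed.

Lemma sum_first : \sum_(y in e0) (first y : nat) = uphalf k.
Proof.
rewrite -big_enum /= (big_nth x0) -/sq.
have -> : size sq = k by rewrite /sq -cardE (uni e0E).
rewrite -sum_even; apply: eq_big_nat => i /andP [_ hi].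
rewrite /first index_uniq //; last exact: enum_uniq.
by rewrite /sq -cardE (uni e0E).
Qed.

Lemma rep_count : #|rep @: E| <= 1 + k * uphalf k.
Proof.
set Fst := [set f in E | (f != e0) && first (pt f)].
have sub : rep @: E \subset e0 |: Fst.
  apply/subsetP => r /imsetP [f fE ->].
  case: (eqVneq f e0) => [-> | fe]; first by rewrite rep_e0 !inE eqxx.
  rewrite !inE; apply/orP; right.
  case: (rep_spec fE fe) => [[h1 ->] | [h1 gS dg]]; first by rewrite fE fe h1.
  move: gS; rewrite inS => /and3P [ge gE pg]; rewrite ge gE /=.
  have [pf pe] := pt_spec fE fe; have [fp _ _] := partner_nf pe h1.
  by rewrite (pt_uniq gE ge pg (partner_in pe)).
apply: leq_trans (subset_leq_card sub) _; rewrite cardsU1.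
have hF : #|Fst| <= k * uphalf k.
  have hd := dcount Fst e0.
  have h1 : #|Fst| <= \sum_(f in Fst) #|f :&: e0|.
    apply: sum_ge1 => f; rewrite inE => /and3P [fE fe _]; by rewrite meet1.
  apply: leq_trans h1 _; rewrite hd -sum_first mulnC big_distrl /=.
  apply: leq_sum => y ye; case: (boolP (first y)) => hy /=.
    rewrite mul1n -(cardS ye); apply: subset_leq_card; apply/subsetP => f.
    by rewrite !inE => /andP [/and3P [-> -> _] ->].
  rewrite mul0n leqn0 cards_eq0; apply/eqP/setP => f; rewrite !inE.
  apply/negP => /andP [/and3P [fE fe hf] yf].
  by move: hf; rewrite (pt_uniq fE fe yf ye) (negbTE hy).
by case: (_ \notin _); rewrite /= ?add0n ?add1n //; apply: leq_trans hF _.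
Qed.

End S.
Unset Implicit Arguments. Set Strict Implicit.

Theorem theorem3p6 (k : nat) (V : finType) (E : {set {set V}}) (e0 : {set V}) :
  2 <= k ->
  hypergraph E ->
  linear E -> uniform k E ->
  #|V| = k ^ 2 -> #|E| = k ^ 2 + 1 ->
  e0 \in E ->
  (forall x, x \in e0 -> deg E x = k + 1) ->
  (forall x, x \notin e0 -> k <= deg E x) ->
  [/\ Delta2 E = k ^ 2 - 1 /\ delta2 E = k ^ 2 - k,
      k + 1 <= chromatic_index E <= 1 + k * uphalf k
    & chromatic_index E <= Delta2 E].
Proof.
move=> k2 _ lin uni cV cE e0E dege0 dego.
have [x0 x0e] : exists x, x \in e0.
  by apply/set0Pn; rewrite -card_gt0 (uni e0 e0E); lia.
have hD : Delta2 E = k ^ 2 - 1 by apply: (Delta2_val (e0 := e0)).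
have hd : delta2 E = k ^ 2 - k by apply: (delta2_val (e0 := e0)).
have hu : k * uphalf k <= k * k.
  apply: leq_mul => //; have := odd_double_half k; rewrite uphalf_half -muln2; lia.
have hup : chromatic_index E <= 1 + k * uphalf k.
  apply: ci_le.
    rewrite add1n; apply: (colorable_rep (rep := rep E e0 x0)).
      move=> f f' fE f'E ff inter; by apply: (@rep_proper k V E e0).
    rewrite -add1n; by apply: rep_count.
  rewrite cE -mulnn; lia.
have hlo : k + 1 <= chromatic_index E.
  apply: ci_ge; last by rewrite cE -mulnn; nia.
  move=> c /(col_lower x0); rewrite -/(deg E x0) dege0 //.
split => //; first by rewrite hlo hup.
apply: leq_trans hup _; rewrite hD -mulnn.
have := odd_double_half k; rewrite -muln2; move: hu k2.
rewrite uphalf_half; case: (odd k) => /=; nia.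
Qed.
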